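(* Let $a\in(-1,0)$ and let $f:\mathbb{R}\to\mathbb{R}$ be a smooth odd function, $f(-x_1)=-f(x_1)$, with $f(x_1)\neq 0$ for all $x_1\in[-2\sqrt{3}/9,\,0)$. For $\alpha\in\mathbb{R}$ consider the planar system $$\frac{dx_1}{dt}=F_1(x;\alpha)=a x_1+x_2+\tfrac32 a x_1x_2+\tfrac32 x_2^2+\alpha f(x_1),\qquad \frac{dx_2}{dt}=F_2(x)=x_1+a x_2+a x_2^2 .$$ Then, as $\alpha$ is varied in a neighbourhood of $0$, this system undergoes a supercritical homoclinic bifurcation in a generic way, i.e. at $\alpha=0$ the following hold: (i) the origin is a saddle fixed point with Jacobian eigenvalues $\lambda_1(0)<0<\lambda_2(0)$; (ii) there is a homoclinic orbit $\gamma^*$ to the origin (namely the alpha loop $\{(x_1,x_2): -x_1^2+x_2^2(1+x_2)=0,\ x_2<0\}$); (iii) the saddle quantity $\sigma_0=\lambda_1(0)+\lambda_2(0)$ is nonzero, and in fact $\sigma_0<0$; (iv) the Melnikov integral $$M(0)=\int_{-\infty}^{+\infty}\varphi(t)\Big(F_1\frac{\partial F_2}{\partial\alpha}-F_2\frac{\partial F_1}{\partial\alpha}\Big)\Big|_{x=x(t),\,\alpha=0}\,dt,\qquad \varphi(t)=\exp\Big(-\int_0^t (\nabla\cdot F)(x(\tau);0)\,d\tau\Big),$$ evaluated along the homoclinic orbit $x(t)$ (parametrised so that $x(0)=(0,-1)$), is nonzero.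
   Context: A homoclinic orbit to a fixed point $x^*$ is an orbit whose $\alpha$-limit and $\omega$-limit sets both equal $\{x^*\}$. Conditions (i)–(iv) are the bifurcation and genericity conditions of the Andronov–Leontovich theorem; when they hold, for all sufficiently small $|\alpha|$ a unique limit cycle bifurcates from $\gamma^*$ in a neighbourhood of the saddle and the homoclinic orbit, and the bifurcation is called supercritical when $\sigma_0<0$ (the bifurcating limit cycle is then stable). *)

(* Defs.v *)
From Stdlib Require Import Reals.
From Coquelicot Require Import Coquelicot.
Open Scope R_scope.

Definition F1 (a : R) (f : R -> R) (alpha x1 x2 : R) : R :=
  a * x1 + x2 + 3/2 * a * x1 * x2 + 3/2 * x2 ^ 2 + alpha * f x1.
Definition F2 (a : R) (x1 x2 : R) : R :=
  x1 + a * x2 + a * x2 ^ 2.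

Definition smooth (f : R -> R) : Prop := forall (n : nat) (x : R), ex_derive_n f n x.

Definition J11 a f alpha x1 x2 := Derive (fun y => F1 a f alpha y x2) x1.
Definition J12 a f alpha x1 x2 := Derive (fun y => F1 a f alpha x1 y) x2.
Definition J21 a (x1 x2 : R) := Derive (fun y => F2 a y x2) x1.
Definition J22 a (x1 x2 : R) := Derive (fun y => F2 a x1 y) x2.

Definition jac_eigenvalue a f alpha x1 x2 (lam : R) : Prop :=
  (J11 a f alpha x1 x2 - lam) * (J22 a x1 x2 - lam)
  - J12 a f alpha x1 x2 * J21 a x1 x2 = 0.

Definition divF a f alpha x1 x2 : R := J11 a f alpha x1 x2 + J22 a x1 x2.

Definition alpha_loop (p1 p2 : R) : Prop := - p1 ^ 2 + p2 ^ 2 * (1 + p2) = 0 /\ p2 < 0.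

(* Main.v *)
From Stdlib Require Import Reals Lra Psatz Ranalysis5 Classical.
Require Import Defs.
From Coquelicot Require Import Coquelicot.
Open Scope R_scope.
Section Orb.
Variable a : R.
Hypothesis ha : -1 < a < 0.
Definition H (s : R) : R :=
  - ln (1 - s) / (1 + a) + ln (1 + s) / (1 - a) - 2 * a / (1 - a ^ 2) * ln (1 + a * s).
Definition dH (s : R) : R := 2 / ((1 - s ^ 2) * (1 + a * s)).
Lemma H_deriv s : -1 < s < 1 -> is_derive H s (dH s).
Proof.
  intros Hs. unfold H, dH. auto_derive.
  - assert (0 < 1 + a * s) by nra. repeat split; lra.
  - assert (0 < 1 + a * s) by nra. field. repeat split; nra.
Qed.
Lemma dH_pos s : -1 < s < 1 -> 0 < dH s.
Proof.
  intros Hs. unfold dH. assert (0 < 1 + a * s) by nra.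
  apply Rdiv_lt_0_compat; [lra|]. apply Rmult_lt_0_compat; nra.
Qed.
Lemma H_cont s : -1 < s < 1 -> continuity_pt H s.
Proof.
  intros Hs. apply continuity_pt_filterlim.
  apply (ex_derive_continuous (K:=R_AbsRing) (V:=R_NormedModule) H).
  eexists; apply H_deriv; auto.
Qed.
Lemma H_incr x y : -1 < x -> x < y -> y < 1 -> H x < H y.
Proof.
  intros h1 h2 h3.
  destruct (MVT_gen H x y dH) as [c [Hc E]].
  - intros z Hz. rewrite Rmin_left in Hz by lra. rewrite Rmax_right in Hz by lra.
    apply H_deriv; lra.
  - intros z Hz. rewrite Rmin_left in Hz by lra. rewrite Rmax_right in Hz by lra.
    apply H_cont; lra.
  - rewrite Rmin_left in Hc by lra. rewrite Rmax_right in Hc by lra.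
    assert (0 < dH c) by (apply dH_pos; lra). nra.
Qed.

Lemma H_surj y : {s : R | -1 < s < 1 /\ H s = y}.
Proof.
  set (c0 := -2 * a / (1 - a ^ 2) * ln (1 + a)).
  set (c1 := -2 * a / (1 - a ^ 2) * ln (1 - a)).
  set (X1 := (1 - a) * (Rabs y + Rabs c1 + 1)).
  set (X2 := (1 + a) * (Rabs y + Rabs c0 + 1)).
  assert (hX1 : 0 < X1) by (unfold X1; pose proof (Rabs_pos y); pose proof (Rabs_pos c1); nra).
  assert (hX2 : 0 < X2) by (unfold X2; pose proof (Rabs_pos y); pose proof (Rabs_pos c0); nra).
  set (lb := exp (- X1) - 1). set (ub := 1 - exp (- X2)).
  assert (e1 : 0 < exp (- X1) < 1).
  { split. apply exp_pos. rewrite <- exp_0. apply exp_increasing. lra. }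
  assert (e2 : 0 < exp (- X2) < 1).
  { split. apply exp_pos. rewrite <- exp_0. apply exp_increasing. lra. }
  assert (hc : 0 < - 2 * a / (1 - a ^ 2)).
  { apply Rdiv_lt_0_compat; nra. }
  assert (Hlb : H lb <= y).
  { unfold H, lb. replace (1 + (exp (- X1) - 1)) with (exp (- X1)) by ring.
    rewrite ln_exp.
    assert (ln (1 - (exp (- X1) - 1)) >= 0).
    { rewrite <- ln_1. apply Rle_ge, ln_le; lra. }
    assert (ln (1 + a * (exp (- X1) - 1)) <= ln (1 - a)).
    { apply ln_le; nra. }
    assert (- ln (1 - (exp (- X1) - 1)) / (1 + a) <= 0).
    { unfold Rdiv. assert (0 < / (1 + a)) by (apply Rinv_0_lt_compat; lra). nra. }
    assert (- 2 * a / (1 - a ^ 2) * ln (1 + a * (exp (- X1) - 1)) <= c1).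
    { unfold c1. apply Rmult_le_compat_l; lra. }
    assert (- X1 / (1 - a) = - (Rabs y + Rabs c1 + 1)) by (unfold X1; field; lra).
    pose proof (Rle_abs y). pose proof (Rle_abs c1). pose proof (Rabs_pos c1).
    replace (2 * a / (1 - a ^ 2)) with (- (- 2 * a / (1 - a ^ 2))) by (field; nra).
    pose proof (Rle_abs (-y)). rewrite Rabs_Ropp in *. clearbody c0 c1 X1 X2 lb ub. lra. }
  assert (Hub : y <= H ub).
  { unfold H, ub. replace (1 - (1 - exp (- X2))) with (exp (- X2)) by ring.
    rewrite ln_exp.
    assert (ln (1 + (1 - exp (- X2))) >= 0).
    { rewrite <- ln_1. apply Rle_ge, ln_le; lra. }
    assert (ln (1 + a) <= ln (1 + a * (1 - exp (- X2)))).
    { apply ln_le; nra. }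
    assert (0 <= ln (1 + (1 - exp (- X2))) / (1 - a)).
    { unfold Rdiv. assert (0 < / (1 - a)) by (apply Rinv_0_lt_compat; lra). nra. }
    assert (c0 <= - 2 * a / (1 - a ^ 2) * ln (1 + a * (1 - exp (- X2)))).
    { unfold c0. apply Rmult_le_compat_l; lra. }
    assert (- - X2 / (1 + a) = (Rabs y + Rabs c0 + 1)) by (unfold X2; field; lra).
    pose proof (Rle_abs y). pose proof (Rle_abs (-c0)). rewrite Rabs_Ropp in *.
    replace (2 * a / (1 - a ^ 2)) with (- (- 2 * a / (1 - a ^ 2))) by (field; nra).
    clearbody c0 c1 X1 X2 lb ub. lra. }
  destruct (f_interv_is_interv H lb ub y) as [s [Hs1 Hs2]].
  - unfold lb, ub; lra.
  - lra.
  - intros z Hz. apply H_cont. unfold lb, ub in Hz; lra.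
  - exists s. unfold lb, ub in Hs1; split; [lra | auto].
Qed.

Definition S (y : R) : R := proj1_sig (H_surj y).
Lemma S_spec y : -1 < S y < 1 /\ H (S y) = y.
Proof. unfold S. destruct (H_surj y) as [s Hs]; simpl; auto. Qed.
Lemma H_inj x y : -1 < x < 1 -> -1 < y < 1 -> H x = H y -> x = y.
Proof.
  intros hx hy E. destruct (Rtotal_order x y) as [h|[h|h]]; auto.
  - pose proof (H_incr x y). lra.
  - pose proof (H_incr y x). lra.
Qed.
Lemma S_H s : -1 < s < 1 -> S (H s) = s.
Proof. intros hs. destruct (S_spec (H s)). apply H_inj; auto. Qed.
Lemma S_lt x y : x < y -> S x < S y.
Proof.
  intros h. destruct (S_spec x) as [h1 h2]. destruct (S_spec y) as [h3 h4].
  destruct (Rlt_or_le (S x) (S y)) as [k|k]; auto.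
  destruct (Rle_lt_or_eq_dec _ _ k) as [k'|k'].
  - pose proof (H_incr (S y) (S x)). lra.
  - rewrite k' in h4. lra.
Qed.
Lemma S_le x y : x <= y -> S x <= S y.
Proof. intros h. destruct (Rle_lt_or_eq_dec _ _ h). left; apply S_lt; auto. subst; lra. Qed.

Lemma S_cont y : continuity_pt S y.
Proof.
  destruct (S_spec y) as [h1 h2].
  set (lb := (S y - 1) / 2). set (ub := (S y + 1) / 2).
  apply (continuity_pt_recip_interv H S lb ub).
  - unfold lb, ub; lra.
  - intros u v hu huv hv. apply H_incr; unfold lb, ub in *; lra.
  - intros x _ _. unfold comp, id. apply S_spec.
  - intros x hx1 hx2. split.
    + destruct (Rle_or_lt lb (S x)) as [k|k]; auto.
      pose proof (H_incr (S x) lb). destruct (S_spec x). unfold lb,ub in *. lra.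
    + destruct (Rle_or_lt (S x) ub) as [k|k]; auto.
      pose proof (H_incr ub (S x)). destruct (S_spec x). unfold lb,ub in *. lra.
  - intros z hz. apply H_cont. unfold lb, ub in *; lra.
  - assert (H lb < H (S y)) by (apply H_incr; unfold lb, ub; lra). assert (H (S y) < H ub) by (apply H_incr; unfold lb, ub; lra). rewrite h2 in *. lra.
Qed.

Lemma S_deriv y : is_derive S y (1 / dH (S y)).
Proof.
  apply is_derive_Reals.
  assert (Prf : forall z, S (y - 1) <= z <= S (y + 1) -> derivable_pt H z).
  { intros z hz. exists (dH z). apply is_derive_Reals, H_deriv.
    destruct (S_spec (y-1)). destruct (S_spec (y+1)). lra. }
  assert (Pi : S (y - 1) <= S y <= S (y + 1)) by (split; apply S_le; lra).
  pose proof (derivable_pt_lim_recip_interv H S (y-1) (y+1) y Prf (S_cont y)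
     ltac:(lra) ltac:(lra) Pi) as D.
  assert (E : derive_pt H (S y) (Prf (S y) Pi) = dH (S y)).
  { apply derive_pt_eq_0. apply is_derive_Reals, H_deriv. apply S_spec. }
  rewrite E in D. apply D.
  - intros x _. unfold comp, id. apply S_spec.
  - pose proof (dH_pos (S y) (proj1 (S_spec y))). lra.
Qed.
Definition sf (t : R) : R := S (- t).
Definition ds (u : R) : R := - ((1 - u ^ 2) * (1 + a * u)) / 2.

Lemma sf_bound t : -1 < sf t < 1.
Proof. apply S_spec. Qed.

Lemma sf_deriv t : is_derive sf t (ds (sf t)).
Proof.
  unfold sf.
  assert (D := is_derive_comp S (fun t => - t) t _ _ (S_deriv (- t)) (is_derive_opp _ _ _ (is_derive_id t))).
  replace (ds (S (- t))) with (scal (opp one) (1 / dH (S (- t)))).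
  - exact D.
  - destruct (S_spec (- t)) as [hb _]. set (u := S (- t)) in *.
    unfold scal, opp, one, mult; simpl. unfold mult, opp, one; simpl.
    unfold ds, dH. assert (0 < 1 + a * u) by nra. field. split; nra.
Qed.

Lemma H0 : H 0 = 0.
Proof.
  unfold H. rewrite Rmult_0_r, Rplus_0_r, Rminus_0_r, ln_1. field. nra.
Qed.
Lemma sf0 : sf 0 = 0.
Proof. unfold sf. rewrite Ropp_0. rewrite <- H0 at 1. apply S_H. lra. Qed.
Lemma sf_lt t1 t2 : t1 < t2 -> sf t2 < sf t1.
Proof. intros h. unfold sf. apply S_lt. lra. Qed.
Lemma sf_neg t : 0 < t -> sf t < 0.
Proof. intros h. rewrite <- sf0. apply sf_lt; auto. Qed.
Lemma sf_pos t : t < 0 -> 0 < sf t.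
Proof. intros h. rewrite <- sf0. apply sf_lt; auto. Qed.

Lemma sf_lim_p : is_lim sf p_infty (-1).
Proof.
  apply is_lim_spec. intros eps. simpl.
  set (q := -1 + Rmin eps 1).
  assert (hq : 0 < Rmin eps 1 <= 1).
  { split. apply Rmin_glb_lt; [apply cond_pos | lra]. apply Rmin_r. }
  exists (- H q). intros t ht.
  assert (sf t < q).
  { unfold sf. rewrite <- (S_H q) by (unfold q; lra). apply S_lt. lra. }
  pose proof (sf_bound t). pose proof (Rmin_l eps 1).
  rewrite Rabs_pos_eq; unfold q in *; lra.
Qed.
Lemma sf_lim_m : is_lim sf m_infty 1.
Proof.
  apply is_lim_spec. intros eps. simpl.
  set (q := 1 - Rmin eps 1).
  assert (hq : 0 < Rmin eps 1 <= 1).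
  { split. apply Rmin_glb_lt; [apply cond_pos | lra]. apply Rmin_r. }
  exists (- H q). intros t ht.
  assert (q < sf t).
  { unfold sf. rewrite <- (S_H q) by (unfold q; lra). apply S_lt. lra. }
  pose proof (sf_bound t). pose proof (Rmin_l eps 1).
  rewrite Rabs_left; unfold q in *; lra.
Qed.

Definition x1f (t : R) : R := sf t ^ 3 - sf t.
Definition x2f (t : R) : R := sf t ^ 2 - 1.

Lemma poly_lim (P : R -> R) (x : R) (l : R) :
  (forall y, ex_derive P y) -> P x = l -> is_lim P x l.
Proof.
  intros hP e. rewrite <- e. apply is_lim_continuity.
  apply continuity_pt_filterlim.
  apply (ex_derive_continuous (K:=R_AbsRing) (V:=R_NormedModule) P). auto.
Qed.

Lemma comp_lim (P : R -> R) (x : Rbar) (l0 l : R) :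
  (forall y, ex_derive P y) -> P l0 = l -> is_lim sf x l0 ->
  Rbar_locally' x (fun y => sf y <> l0) ->
  is_lim (fun t => P (sf t)) x l.
Proof.
  intros hP e hl hne. eapply is_lim_comp; [ | exact hl | ].
  apply poly_lim; auto.
  eapply filter_imp; [| exact hne]. intros y hy hc. apply hy. injection hc; auto.
Qed.

Lemma x_lims : is_lim x1f p_infty 0 /\ is_lim x2f p_infty 0 /\
   is_lim x1f m_infty 0 /\ is_lim x2f m_infty 0.
Proof.
  assert (np : Rbar_locally' p_infty (fun y => sf y <> -1)).
  { exists 0. intros y _. pose proof (sf_bound y). lra. }
  assert (nm : Rbar_locally' m_infty (fun y => sf y <> 1)).
  { exists 0. intros y _. pose proof (sf_bound y). lra. }
  repeat split.
  - apply (comp_lim (fun u => u ^ 3 - u) p_infty (-1)); auto.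
    intros; auto_derive; auto. ring.
    apply sf_lim_p.
  - apply (comp_lim (fun u => u ^ 2 - 1) p_infty (-1)); auto.
    intros; auto_derive; auto. ring.
    apply sf_lim_p.
  - apply (comp_lim (fun u => u ^ 3 - u) m_infty 1); auto.
    intros; auto_derive; auto. ring.
    apply sf_lim_m.
  - apply (comp_lim (fun u => u ^ 2 - 1) m_infty 1); auto.
    intros; auto_derive; auto. ring.
    apply sf_lim_m.
Qed.


Lemma comp_deriv (P dP : R -> R) t : (forall y, is_derive P y (dP y)) ->
  is_derive (fun t => P (sf t)) t (dP (sf t) * ds (sf t)).
Proof.
  intros hP. assert (D := is_derive_comp P sf t _ _ (hP (sf t)) (sf_deriv t)).
  replace (dP (sf t) * ds (sf t)) with (scal (ds (sf t)) (dP (sf t))); auto.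
  unfold scal; simpl; unfold mult; simpl. ring.
Qed.

Lemma x1_deriv f t : is_derive x1f t (F1 a f 0 (x1f t) (x2f t)).
Proof.
  replace (F1 a f 0 (x1f t) (x2f t)) with ((3 * sf t ^ 2 - 1) * ds (sf t)).
  - apply (comp_deriv (fun u => u ^ 3 - u) (fun u => 3 * u ^ 2 - 1)).
    intros y. auto_derive; auto. ring.
  - unfold F1, x1f, x2f, ds. field.
Qed.

Lemma x2_deriv t : is_derive x2f t (F2 a (x1f t) (x2f t)).
Proof.
  replace (F2 a (x1f t) (x2f t)) with ((2 * sf t) * ds (sf t)).
  - apply (comp_deriv (fun u => u ^ 2 - 1) (fun u => 2 * u)).
    intros y. auto_derive; auto. ring.
  - unfold F2, x1f, x2f, ds. field.
Qed.

Lemma orbit_char p1 p2 : alpha_loop p1 p2 <-> exists t, x1f t = p1 /\ x2f t = p2.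
Proof.
  unfold alpha_loop. split.
  - intros [E hp]. set (q := p1 / p2).
    assert (hq : q ^ 2 = 1 + p2).
    { unfold q. apply (Rmult_eq_reg_r (p2 ^ 2)); [| nra]. field_simplify; [|lra].
      nra. }
    assert (hq1 : -1 < q < 1) by nra.
    exists (- H q). unfold x1f, x2f, sf. rewrite Ropp_involutive, S_H by auto.
    split.
    + replace (q ^ 3 - q) with (q * (q ^ 2 - 1)) by ring. rewrite hq.
      unfold q. field. lra.
    + lra.
  - intros [t [e1 e2]]. subst. unfold x1f, x2f. pose proof (sf_bound t).
    split. ring. nra.
Qed.

End Orb.

Lemma J11_e a f x1 x2 : J11 a f 0 x1 x2 = a + 3/2 * a * x2.
Proof.
  unfold J11, F1.
  rewrite (Derive_ext _ (fun y => a * y + x2 + 3/2 * a * y * x2 + 3/2 * x2 ^ 2)) by (intros; ring).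
  apply is_derive_unique. auto_derive; auto; field.
Qed.
Lemma J12_e a f x1 x2 : J12 a f 0 x1 x2 = 1 + 3/2 * a * x1 + 3 * x2.
Proof.
  unfold J12, F1.
  rewrite (Derive_ext _ (fun y => a * x1 + y + 3/2 * a * x1 * y + 3/2 * y ^ 2)) by (intros; ring).
  apply is_derive_unique. auto_derive; auto; field.
Qed.
Lemma J21_e a x1 x2 : J21 a x1 x2 = 1.
Proof. unfold J21, F2. apply is_derive_unique. auto_derive; auto; ring. Qed.
Lemma J22_e a x1 x2 : J22 a x1 x2 = a + 2 * a * x2.
Proof. unfold J22, F2. apply is_derive_unique. auto_derive; auto; field. Qed.
Lemma divF_e a f x1 x2 : divF a f 0 x1 x2 = 2 * a + 7/2 * a * x2.
Proof. unfold divF. rewrite J11_e, J22_e. field. Qed.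
Lemma dF2_e a x1 x2 : Derive (fun al : R => F2 a x1 x2) 0 = 0.
Proof. apply Derive_const. Qed.
Lemma dF1_e a f x1 x2 : Derive (fun al => F1 a f al x1 x2) 0 = f x1.
Proof. unfold F1. apply is_derive_unique. auto_derive; auto. ring. Qed.

Lemma part_i a f : -1 < a < 0 ->
  (F1 a f 0 0 0 = 0 /\ F2 a 0 0 = 0 /\
   exists lam1 lam2 : R,
     jac_eigenvalue a f 0 0 0 lam1 /\ jac_eigenvalue a f 0 0 0 lam2 /\
     lam1 < 0 < lam2 /\
     (forall lam, jac_eigenvalue a f 0 0 0 lam -> lam = lam1 \/ lam = lam2) /\
     lam1 + lam2 <> 0 /\ lam1 + lam2 < 0).
Proof.
  intros ha.
  assert (E : forall lam, jac_eigenvalue a f 0 0 0 lam <-> (a - lam) ^ 2 - 1 = 0).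
  { intros lam. unfold jac_eigenvalue. rewrite J11_e, J12_e, J21_e, J22_e.
    match goal with |- (?X = 0 <-> _) => replace X with ((a - lam) ^ 2 - 1) by ring end.
    tauto. }
  split; [unfold F1; ring|]. split; [unfold F2; ring|].
  exists (a - 1), (a + 1). rewrite !E. repeat split; try ring; try lra.
  intros lam h. rewrite E in h.
  assert (Hp : (lam - (a - 1)) * (lam - (a + 1)) = 0) by (rewrite <- h; ring).
  destruct (Rmult_integral _ _ Hp) as [k|k]; [left|right]; lra.
Qed.

Lemma mono_lim_p (K : R -> R) B : (forall x y, x <= y -> K x <= K y) ->
  (forall x, K x <= B) -> exists L : R, is_lim K p_infty L /\ forall x, K x <= L.
Proof.
  intros hm hb.
  set (E := fun y => exists x, y = K x).
  destruct (completeness E) as [m [hub hlub]].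
  { exists B. intros y [x ->]. auto. }
  { exists (K 0). exists 0. auto. }
  assert (hle : forall x, K x <= m) by (intros x; apply hub; exists x; auto).
  exists m. split; auto.
  apply is_lim_spec. intros eps. simpl.
  assert (ex : exists x0, m - eps < K x0).
  { apply NNPP. intros hn.
    assert (hU : is_upper_bound E (m - eps)).
    { intros y [x ->]. destruct (Rle_or_lt (K x) (m - eps)) as [k|k]; auto.
      exfalso; apply hn; exists x; auto. }
    pose proof (hlub _ hU). pose proof (cond_pos eps). lra. }
  destruct ex as [x0 hx0]. exists x0. intros x hx.
  pose proof (hm x0 x (Rlt_le _ _ hx)). pose proof (hle x).
  rewrite Rabs_left1; lra.
Qed.

Lemma mono_lim_m (K : R -> R) B : (forall x y, x <= y -> K x <= K y) ->
  (forall x, B <= K x) -> exists L : R, is_lim K m_infty L /\ forall x, L <= K x.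
Proof.
  intros hm hb.
  set (E := fun y => exists x, y = - K x).
  destruct (completeness E) as [m [hub hlub]].
  { exists (- B). intros y [x ->]. pose proof (hb x). lra. }
  { exists (- K 0). exists 0. auto. }
  assert (hle : forall x, - K x <= m) by (intros x; apply hub; exists x; auto).
  exists (- m). split; [| intros x; pose proof (hle x); lra].
  apply is_lim_spec. intros eps. simpl.
  assert (ex : exists x0, m - eps < - K x0).
  { apply NNPP. intros hn.
    assert (hU : is_upper_bound E (m - eps)).
    { intros y [x ->]. destruct (Rle_or_lt (- K x) (m - eps)) as [k|k]; auto.
      exfalso; apply hn; exists x; auto. }
    pose proof (hlub _ hU). pose proof (cond_pos eps). lra. }
  destruct ex as [x0 hx0]. exists x0. intros x hx.
  pose proof (hm x x0 (Rlt_le _ _ hx)). pose proof (hle x).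
  rewrite Rabs_pos_eq; lra.
Qed.

Section Mel.
Variable a : R.
Variable f : R -> R.
Hypothesis ha : -1 < a < 0.
Hypothesis hsmooth : smooth f.
Hypothesis hodd : forall x1, f (- x1) = - f x1.
Hypothesis hnz : forall x1, - (2 * sqrt 3 / 9) <= x1 < 0 -> f x1 <> 0.

Local Notation s := (sf a ha).
Local Notation X1 := (x1f a ha).
Local Notation X2 := (x2f a ha).

Definition cc := 2 * sqrt 3 / 9.
Lemma cc_pos : 0 < cc.
Proof. unfold cc. pose proof (sqrt_lt_R0 3 ltac:(lra)). lra. Qed.
Lemma cc_sq : cc * cc = 4 / 27.
Proof. unfold cc. pose proof (sqrt_sqrt 3 ltac:(lra)). nra. Qed.

Lemma f_der y : ex_derive f y.
Proof. exact (hsmooth 1%nat y). Qed.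
Lemma f_cont y : continuous f y.
Proof. apply (ex_derive_continuous (K:=R_AbsRing) (V:=R_NormedModule)), f_der. Qed.

Lemma sf_der t : ex_derive s t.
Proof. eexists; apply sf_deriv; auto. Qed.
Lemma sf_cont t : continuous s t.
Proof. apply (ex_derive_continuous (K:=R_AbsRing) (V:=R_NormedModule)), sf_der. Qed.

Definition Dc (t : R) : R := 2 * a + 7/2 * a * X2 t.
Lemma Dc_cont t : continuous Dc t.
Proof.
  apply (ex_derive_continuous (K:=R_AbsRing) (V:=R_NormedModule)).
  unfold Dc, x2f. auto_derive. apply sf_der.
Qed.
Definition Pint (t : R) : R := RInt Dc 0 t.
Lemma Pint_deriv t : is_derive Pint t (Dc t).
Proof.
  apply (is_derive_RInt Dc Pint 0 t).
  - apply filter_forall. intros b. apply (RInt_correct (V:=R_CompleteNormedModule) Dc 0 b). apply (ex_RInt_continuous (V:=R_CompleteNormedModule)).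
    intros; apply Dc_cont.
  - apply Dc_cont.
Qed.
Definition phi (t : R) : R := exp (- Pint t).
Lemma phi_pos t : 0 < phi t.
Proof. apply exp_pos. Qed.
Lemma phi_deriv t : is_derive phi t (- Dc t * phi t).
Proof.
  unfold phi. auto_derive.
  - eexists; apply Pint_deriv.
  - replace (Derive (fun x => Pint x) t) with (Dc t). ring.
    symmetry; apply is_derive_unique; apply Pint_deriv.
Qed.


Lemma X1_range_pos t : 0 < s t -> - cc <= X1 t < 0.
Proof.
  intros hp. pose proof (sf_bound a ha t) as hb. unfold x1f.
  set (u := s t) in *. clearbody u. pose proof cc_pos. pose proof cc_sq.
  assert (hv : (u - u ^ 3) ^ 2 <= cc * cc).
  { rewrite cc_sq. assert (0 <= (u^2 - 1/3) ^ 2 * (4/3 - u^2)).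
    { apply Rmult_le_pos. apply pow2_ge_0. nra. }
    nra. }
  assert (0 < u - u ^ 3) by nra.
  split; [| nra].
  destruct (Rle_or_lt (u - u^3) cc); nra.
Qed.
Lemma X1_range_neg t : s t < 0 -> 0 < X1 t <= cc.
Proof.
  intros hp. pose proof (sf_bound a ha t) as hb. unfold x1f.
  set (u := s t) in *. clearbody u. pose proof cc_pos. pose proof cc_sq.
  assert (hv : (u - u ^ 3) ^ 2 <= cc * cc).
  { rewrite cc_sq. assert (0 <= (u^2 - 1/3) ^ 2 * (4/3 - u^2)).
    { apply Rmult_le_pos. apply pow2_ge_0. nra. }
    nra. }
  assert (u - u ^ 3 < 0) by nra.
  split; [nra |].
  destruct (Rle_or_lt (u^3 - u) cc); nra.
Qed.
Lemma X1_abs t : - cc <= X1 t <= cc.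
Proof.
  pose proof cc_pos.
  destruct (Rtotal_order (s t) 0) as [h|[h|h]].
  - pose proof (X1_range_neg t h). lra.
  - unfold x1f. rewrite h. simpl. lra.
  - pose proof (X1_range_pos t h). lra.
Qed.

Definition sig := f (- cc).
Lemma sig_nz : sig <> 0.
Proof. unfold sig. apply hnz. pose proof cc_pos. fold cc. lra. Qed.

Lemma sig_sign y : - cc <= y < 0 -> 0 < sig * f y.
Proof.
  intros hy. pose proof sig_nz.
  assert (fy : f y <> 0) by (apply hnz; fold cc; lra).
  destruct (Rlt_or_le 0 (sig * f y)) as [k|k]; auto. exfalso.
  assert (k' : sig * f y < 0).
  { destruct (Rle_lt_or_eq_dec _ _ k); auto. exfalso.
    destruct (Rmult_integral _ _ e); auto. }
  destruct (Rle_lt_or_eq_dec (- cc) y (proj1 hy)) as [l|l].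
  - destruct (IVT_interv (fun z => - (sig * f z)) (- cc) y) as [z [hz ez]].
    + intros z hz. apply continuity_pt_filterlim.
      apply (continuous_opp (fun z => sig * f z)).
      apply (continuous_mult (fun _ => sig) f). apply continuous_const. apply f_cont.
    + auto.
    + pose proof (Rsqr_pos_lt sig sig_nz). unfold Rsqr in *. unfold sig in *. lra.
    + lra.
    + assert (hz0 : sig * f z = 0) by lra.
      destruct (Rmult_integral _ _ hz0) as [e|e]; auto.
      apply (hnz z); auto. fold cc; lra.
  - subst y. unfold sig in k'. nra.
Qed.

Lemma w_nonneg t : 0 <= s t * (sig * f (X1 t)).
Proof.
  destruct (Rtotal_order (s t) 0) as [h|[h|h]].
  - pose proof (X1_range_neg t h).
    rewrite <- (Ropp_involutive (X1 t)), hodd.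
    assert (0 < sig * f (- X1 t)) by (apply sig_sign; lra). nra.
  - rewrite h. lra.
  - pose proof (sig_sign _ (X1_range_pos t h)). nra.
Qed.
Lemma w_pos t : 0 < t -> 0 < s t * (sig * f (X1 t)).
Proof.
  intros ht. pose proof (sf_neg a ha t ht) as h.
  pose proof (X1_range_neg t h).
  rewrite <- (Ropp_involutive (X1 t)), hodd.
  assert (0 < sig * f (- X1 t)) by (apply sig_sign; lra). nra.
Qed.


Definition hh (t : R) : R := - phi t * F2 a (X1 t) (X2 t) * f (X1 t).
Definition kk (t : R) : R := sig * hh t.
Lemma kk_eq t : kk t = phi t * ((1 - s t ^ 2) * (1 + a * s t)) * (s t * (sig * f (X1 t))).
Proof. unfold kk, hh, F2, x1f, x2f. ring. Qed.
Lemma fac_pos t : 0 < (1 - s t ^ 2) * (1 + a * s t).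
Proof. pose proof (sf_bound a ha t). set (u := s t) in *. clearbody u. apply Rmult_lt_0_compat; nra. Qed.
Lemma kk_nonneg t : 0 <= kk t.
Proof.
  rewrite kk_eq. pose proof (phi_pos t). pose proof (fac_pos t). pose proof (w_nonneg t).
  apply Rmult_le_pos; auto. apply Rmult_le_pos; lra.
Qed.
Lemma kk_pos t : 0 < t -> 0 < kk t.
Proof.
  intros ht. rewrite kk_eq. pose proof (phi_pos t). pose proof (fac_pos t). pose proof (w_pos t ht).
  apply Rmult_lt_0_compat; auto. apply Rmult_lt_0_compat; lra.
Qed.
Lemma X1_der t : ex_derive X1 t.
Proof. eexists; apply (x1_deriv a ha f). Qed.
Lemma X2_der t : ex_derive X2 t.
Proof. eexists; apply x2_deriv. Qed.
Lemma phi_der t : ex_derive phi t.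
Proof. eexists; apply phi_deriv. Qed.
Lemma kk_der t : ex_derive kk t.
Proof.
  unfold kk, hh, F2. auto_derive. repeat split;
  first [apply phi_der | apply X1_der | apply X2_der | apply f_der].
Qed.
Lemma kk_cont t : continuous kk t.
Proof. apply (ex_derive_continuous (K:=R_AbsRing) (V:=R_NormedModule)), kk_der. Qed.

Lemma f_bound : exists Bf, 0 <= Bf /\ forall y, - cc <= y <= cc -> Rabs (f y) <= Bf.
Proof.
  destruct (continuity_ab_maj (fun y => Rabs (f y)) (- cc) cc) as [m [hm _]].
  - pose proof cc_pos; lra.
  - intros c hc. apply continuity_pt_filterlim. apply continuous_Rabs_comp, f_cont.
  - exists (Rabs (f m)). split; [apply Rabs_pos | auto].
Qed.

Section Bnd.
Variable Bf : R.
Hypothesis hBf0 : 0 <= Bf.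
Hypothesis hBf : forall y, - cc <= y <= cc -> Rabs (f y) <= Bf.
Definition CC := 4 * Rabs sig * Bf.
Lemma CC_nonneg : 0 <= CC.
Proof. unfold CC. pose proof (Rabs_pos sig). nra. Qed.
Lemma kk_le t : kk t <= (Rabs sig * Bf) * (phi t * ((1 - s t ^ 2) * (1 + a * s t))).
Proof.
  rewrite kk_eq. pose proof (phi_pos t). pose proof (fac_pos t).
  assert (s t * (sig * f (X1 t)) <= Rabs sig * Bf).
  { eapply Rle_trans. apply Rle_abs. rewrite !Rabs_mult.
    pose proof (hBf _ (X1_abs t)). pose proof (sf_bound a ha t).
    assert (Rabs (s t) <= 1) by (apply Rabs_le; lra).
    pose proof (Rabs_pos (s t)). pose proof (Rabs_pos sig). pose proof (Rabs_pos (f (X1 t))).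
    apply Rle_trans with (1 * (Rabs sig * Bf)); [| lra].
    apply Rmult_le_compat; try nra. }
  assert (0 < phi t * ((1 - s t ^ 2) * (1 + a * s t))) by (apply Rmult_lt_0_compat; auto).
  nra.
Qed.
Lemma kk_le_neg t : s t <= 0 -> kk t <= CC * (phi t * (1 + s t)).
Proof.
  intros h. pose proof (kk_le t). pose proof (sf_bound a ha t). pose proof (phi_pos t).
  pose proof (Rabs_pos sig).
  set (u := s t) in *. set (p := phi t) in *. clearbody u p.
  assert ((1 - u ^ 2) * (1 + a * u) <= 4 * (1 + u)).
  { replace (1 - u ^ 2) with ((1 + u) * (1 - u)) by ring.
    assert ((1 - u) * (1 + a * u) <= 4) by nra. nra. }
  unfold CC. assert (0 <= Rabs sig * Bf) by nra.
  apply Rle_trans with ((Rabs sig * Bf) * (p * (4 * (1 + u)))); [| nra].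
  eapply Rle_trans; [eassumption|]. apply Rmult_le_compat_l; auto.
  apply Rmult_le_compat_l; lra.
Qed.
Lemma kk_le_pos t : 0 <= s t -> kk t <= CC * (phi t * (1 - s t)).
Proof.
  intros h. pose proof (kk_le t). pose proof (sf_bound a ha t). pose proof (phi_pos t).
  pose proof (Rabs_pos sig).
  set (u := s t) in *. set (p := phi t) in *. clearbody u p.
  assert ((1 - u ^ 2) * (1 + a * u) <= 4 * (1 - u)).
  { replace (1 - u ^ 2) with ((1 + u) * (1 - u)) by ring.
    assert ((1 + u) * (1 + a * u) <= 4) by nra. nra. }
  unfold CC. assert (0 <= Rabs sig * Bf) by nra.
  apply Rle_trans with ((Rabs sig * Bf) * (p * (4 * (1 - u)))); [| nra].
  eapply Rle_trans; [eassumption|]. apply Rmult_le_compat_l; auto.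
  apply Rmult_le_compat_l; lra.
Qed.
End Bnd.


Lemma Derive_phi t : Derive (fun x => phi x) t = - Dc t * phi t.
Proof. apply is_derive_unique, phi_deriv. Qed.
Lemma Derive_s t : Derive (fun x => s x) t = ds a (s t).
Proof. apply is_derive_unique, sf_deriv. Qed.

Definition psi (t : R) : R := phi t * (1 + s t).
Definition chi (t : R) : R := phi t * (1 - s t).
Definition dpsi (t : R) : R := - Dc t * phi t * (1 + s t) + phi t * ds a (s t).
Definition dchi (t : R) : R := - Dc t * phi t * (1 - s t) - phi t * ds a (s t).
Lemma psi_deriv t : is_derive psi t (dpsi t).
Proof.
  unfold psi, dpsi. auto_derive.
  - split; [apply phi_der | split; [apply sf_der | auto]].
  - rewrite Derive_phi, Derive_s. ring.
Qed.
Lemma chi_deriv t : is_derive chi t (dchi t).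
Proof.
  unfold chi, dchi. auto_derive.
  - split; [apply phi_der | split; [apply sf_der | auto]].
  - rewrite Derive_phi, Derive_s. ring.
Qed.
Lemma psi_nonneg t : 0 <= psi t.
Proof. unfold psi. pose proof (phi_pos t). pose proof (sf_bound a ha t). set (u := s t) in *. clearbody u. nra. Qed.
Lemma chi_nonneg t : 0 <= chi t.
Proof. unfold chi. pose proof (phi_pos t). pose proof (sf_bound a ha t). set (u := s t) in *. clearbody u. nra. Qed.

Lemma dpsi_le t : s t <= 0 -> dpsi t <= - ((1 + a) / 2) * psi t.
Proof.
  intros h. unfold dpsi, psi, Dc, ds, x2f. pose proof (phi_pos t). pose proof (sf_bound a ha t).
  set (u := s t) in *. set (p := phi t) in *. clearbody u p.
  assert (E : -6 * a * u ^ 2 + (1 - a) * u + 4 * a <= 0).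
  { assert (0 <= (- a) * (- u * (u + 1))) by (apply Rmult_le_pos; nra). nra. }
  assert (0 <= p * (1 + u)) by nra.
  replace (- (2 * a + 7 / 2 * a * (u ^ 2 - 1)) * p * (1 + u) + p * (- ((1 - u ^ 2) * (1 + a * u)) / 2)
     - (- ((1 + a) / 2) * (p * (1 + u))))
    with ((p * (1 + u)) * ((-6 * a * u ^ 2 + (1 - a) * u + 4 * a) / 2)) by field.
  nra.
Qed.

Lemma dchi_ge t : 9/10 <= s t -> chi t / 2 <= dchi t.
Proof.
  intros h. unfold dchi, chi, Dc, ds, x2f. pose proof (phi_pos t). pose proof (sf_bound a ha t).
  set (u := s t) in *. set (p := phi t) in *. clearbody u p.
  assert (E : 0 <= a * (-6 * u ^ 2 + u + 3) + u).
  { assert (-6 * u ^ 2 + u + 3 <= 0) by nra. nra. }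
  assert (0 <= p * (1 - u)) by nra.
  replace (- (2 * a + 7 / 2 * a * (u ^ 2 - 1)) * p * (1 - u) - p * (- ((1 - u ^ 2) * (1 + a * u)) / 2)
     - p * (1 - u) / 2)
    with ((p * (1 - u)) * ((a * (-6 * u ^ 2 + u + 3) + u) / 2)) by field.
  nra.
Qed.

Lemma decr_deriv (G dG : R -> R) x y : x <= y -> (forall t, is_derive G t (dG t)) ->
  (forall t, x <= t <= y -> dG t <= 0) -> G y <= G x.
Proof.
  intros hxy hd hn.
  destruct (MVT_gen G x y dG) as [c [hc E]].
  - intros; apply hd.
  - intros z _. apply continuity_pt_filterlim.
    apply (ex_derive_continuous (K:=R_AbsRing) (V:=R_NormedModule)). eexists; apply hd.
  - rewrite Rmin_left in hc by lra. rewrite Rmax_right in hc by lra.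
    pose proof (hn c hc). nra.
Qed.

Definition KK (t : R) : R := RInt kk 0 t.
Lemma KK_deriv t : is_derive KK t (kk t).
Proof.
  apply (is_derive_RInt kk KK 0 t).
  - apply filter_forall. intros b. apply (RInt_correct (V:=R_CompleteNormedModule) kk 0 b).
    apply (ex_RInt_continuous (V:=R_CompleteNormedModule)). intros; apply kk_cont.
  - apply kk_cont.
Qed.
Lemma KK0 : KK 0 = 0.
Proof. unfold KK. apply (RInt_point (V:=R_CompleteNormedModule)). Qed.
Lemma KK_mono x y : x <= y -> KK x <= KK y.
Proof.
  intros h. assert (- KK y <= - KK x); [| lra].
  apply (decr_deriv (fun t => - KK t) (fun t => - kk t)); auto.
  - intros t. apply (is_derive_opp KK t (kk t)), KK_deriv.
  - intros t _. pose proof (kk_nonneg t). lra.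
Qed.


Lemma s_nonpos_ge0 t : 0 <= t -> s t <= 0.
Proof.
  intros h. destruct (Rle_lt_or_eq_dec _ _ h) as [k|k].
  - pose proof (sf_neg a ha t k). lra.
  - subst. rewrite sf0. lra.
Qed.

Definition T0 := - H a (9/10).
Lemma sT0 : s T0 = 9/10.
Proof. unfold T0, sf. rewrite Ropp_involutive. apply S_H; lra. Qed.
Lemma s_ge_T0 t : t <= T0 -> 9/10 <= s t.
Proof.
  intros h. rewrite <- sT0. destruct (Rle_lt_or_eq_dec _ _ h) as [k|k].
  - pose proof (sf_lt a ha _ _ k). lra.
  - subst; lra.
Qed.

Section Bnd2.
Variable Bf : R.
Hypothesis hBf0 : 0 <= Bf.
Hypothesis hBf : forall y, - cc <= y <= cc -> Rabs (f y) <= Bf.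

Lemma KK_upper t : KK t <= (CC Bf / ((1 + a) / 2)) * psi 0.
Proof.
  pose proof (CC_nonneg Bf hBf0) as hC.
  assert (hm : 0 < (1 + a) / 2) by lra.
  assert (hR : 0 <= (CC Bf / ((1 + a) / 2)) * psi 0).
  { apply Rmult_le_pos; [apply Rdiv_le_0_compat; lra | apply psi_nonneg]. }
  destruct (Rle_or_lt t 0) as [ht|ht].
  - pose proof (KK_mono t 0 ht). rewrite KK0 in *. lra.
  - set (m := (1 + a) / 2) in *. set (C := CC Bf) in *.
    assert (G : KK t + C / m * psi t <= KK 0 + C / m * psi 0).
    { apply (decr_deriv (fun t => KK t + C / m * psi t) (fun t => kk t + C / m * dpsi t)).
      - lra.
      - intros x. apply (is_derive_plus KK (fun t => C / m * psi t)). apply KK_deriv.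
        apply is_derive_scal, psi_deriv.
      - intros x hx. pose proof (s_nonpos_ge0 x (proj1 hx)) as hs.
        pose proof (kk_le_neg Bf hBf0 hBf x hs). pose proof (dpsi_le x hs).
        fold C in H1.
        assert (C / m * dpsi x <= C / m * (- m * psi x)).
        { apply Rmult_le_compat_l; [apply Rdiv_le_0_compat; lra | auto]. }
        replace (C / m * (- m * psi x)) with (- (C * psi x)) in H3 by (field; lra).
        unfold psi in *. lra. }
    rewrite KK0 in G. assert (0 <= C / m * psi t).
    { apply Rmult_le_pos; [apply Rdiv_le_0_compat; lra | apply psi_nonneg]. }
    lra.
Qed.

Lemma KK_lower t : KK T0 - 2 * CC Bf * chi T0 <= KK t.
Proof.
  pose proof (CC_nonneg Bf hBf0) as hC. set (C := CC Bf) in *.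
  destruct (Rle_or_lt T0 t) as [ht|ht].
  - pose proof (KK_mono _ _ ht). pose proof (chi_nonneg T0). nra.
  - assert (G : KK T0 - 2 * C * chi T0 <= KK t - 2 * C * chi t).
    { apply (decr_deriv (fun t => KK t - 2 * C * chi t) (fun t => kk t - 2 * C * dchi t)).
      - lra.
      - intros x. apply (is_derive_minus KK (fun t => 2 * C * chi t)). apply KK_deriv.
        apply is_derive_scal, chi_deriv.
      - intros x hx. assert (hs : 9/10 <= s x) by (apply s_ge_T0; lra).
        pose proof (kk_le_pos Bf hBf0 hBf x ltac:(lra)). pose proof (dchi_ge x hs).
        fold C in H1. unfold chi in *. nra. }
    pose proof (chi_nonneg t). nra.
Qed.

End Bnd2.

Lemma kk_integral : exists M, is_RInt_gen kk (Rbar_locally m_infty) (Rbar_locally p_infty) M /\ 0 < M.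
Proof.
  destruct f_bound as [Bf [h0 h]].
  destruct (mono_lim_p KK _ KK_mono (KK_upper Bf h0 h)) as [Lp [hp hp']].
  destruct (mono_lim_m KK _ KK_mono (KK_lower Bf h0 h)) as [Lm [hm hm']].
  exists (Lp - Lm). split.
  - apply (is_RInt_gen_ext (Derive KK)).
    + apply filter_forall. intros ab x _. apply is_derive_unique, KK_deriv.
    + apply (is_RInt_gen_Derive KK Lm Lp).
      * apply filter_forall. intros ab x _. eexists; apply KK_deriv.
      * apply filter_forall. intros ab x _.
        apply (continuous_ext kk). intros y. symmetry. apply is_derive_unique, KK_deriv.
        apply kk_cont.
      * exact hm.
      * exact hp.
  - pose proof (hp' 1). pose proof (hm' 0). rewrite KK0 in *.
    assert (0 < KK 1).
    { unfold KK. apply RInt_gt_0. lra. intros x hx. apply kk_pos. lra.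
      intros; apply kk_cont. }
    lra.
Qed.

End Mel.

Theorem theorem5 (a : R) (f : R -> R)
  (ha : -1 < a < 0)
  (hsmooth : smooth f)
  (hodd : forall x1, f (- x1) = - f x1)
  (hnz : forall x1, - (2 * sqrt 3 / 9) <= x1 < 0 -> f x1 <> 0) :
  (* (i) the origin is a saddle fixed point at alpha = 0 *)
  (F1 a f 0 0 0 = 0 /\ F2 a 0 0 = 0 /\
   exists lam1 lam2 : R,
     jac_eigenvalue a f 0 0 0 lam1 /\ jac_eigenvalue a f 0 0 0 lam2 /\
     lam1 < 0 < lam2 /\
     (forall lam, jac_eigenvalue a f 0 0 0 lam -> lam = lam1 \/ lam = lam2) /\
  (* (iii) saddle quantity sigma0 = lam1 + lam2 is nonzero, indeed negative *)
     lam1 + lam2 <> 0 /\ lam1 + lam2 < 0) /\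
  (* (ii) homoclinic orbit x(t) to the origin at alpha = 0, x(0) = (0,-1),
     whose orbit is the alpha loop; (iv) Melnikov integral along it is nonzero *)
  (exists x1 x2 : R -> R,
     (forall t, is_derive x1 t (F1 a f 0 (x1 t) (x2 t))) /\
     (forall t, is_derive x2 t (F2 a (x1 t) (x2 t))) /\
     x1 0 = 0 /\ x2 0 = -1 /\
     is_lim x1 p_infty 0 /\ is_lim x2 p_infty 0 /\
     is_lim x1 m_infty 0 /\ is_lim x2 m_infty 0 /\
     (forall p1 p2, alpha_loop p1 p2 <-> exists t, x1 t = p1 /\ x2 t = p2) /\
     exists M : R,
       is_RInt_gen
         (fun t =>
            exp (- RInt (fun tau => divF a f 0 (x1 tau) (x2 tau)) 0 t) *
            (F1 a f 0 (x1 t) (x2 t) * Derive (fun al => F2 a (x1 t) (x2 t)) 0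
             - F2 a (x1 t) (x2 t) * Derive (fun al => F1 a f al (x1 t) (x2 t)) 0))
         (Rbar_locally m_infty) (Rbar_locally p_infty) M /\
       M <> 0).
Proof.
  split; [apply part_i; auto |].
  exists (x1f a ha), (x2f a ha).
  destruct (x_lims a ha) as [l1 [l2 [l3 l4]]].
  split; [intros t; apply x1_deriv |].
  split; [intros t; apply x2_deriv |].
  split; [unfold x1f; rewrite sf0; ring |].
  split; [unfold x2f; rewrite sf0; ring |].
  do 4 (split; [assumption|]).
  split; [apply orbit_char |].
  destruct (kk_integral a f ha hsmooth hodd hnz) as [K [hK hKpos]].
  pose proof (sig_nz f hnz) as hs.
  exists (/ sig f * K). split.
  - apply (is_RInt_gen_ext (fun y => scal (/ sig f) (kk a f ha y))).
    + apply filter_forall. intros ab x _.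
      unfold scal; simpl; unfold mult; simpl.
      rewrite dF2_e, dF1_e.
      replace (RInt (fun tau => divF a f 0 (x1f a ha tau) (x2f a ha tau)) 0 x) with (Pint a ha x).
      * unfold kk, hh, phi. field. auto.
      * unfold Pint. apply RInt_ext. intros y _. rewrite divF_e. reflexivity.
    + apply (is_RInt_gen_scal (kk a f ha)). auto.
  - apply Rmult_integral_contrapositive_currified.
    apply Rinv_neq_0_compat; auto. lra.
Qed.
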